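(* Let $r,k,p,q$ be integers, all greater than $1$, with $r\ge k$, $p\ge k+1$ and $2\le q\le\binom{p}{k}$. Then \[ F_k(r,p,q) \le r^{\binom{F_{k-1}(r,p-1,q)}{k-1}}. \] Here, when $q>\binom{p-1}{k-1}$, $F_{k-1}(r,p-1,q)$ is interpreted as $p-1$.
   Context: For positive integers $k,p,q$ with $p\ge k+1$ and $2\le q\le\binom{p}{k}$, and a positive integer $r$, $F_k(r,p,q)$ is the minimum integer $n$ such that every coloring of the edges of the complete $k$-uniform hypergraph $K_n^{(k)}$ with $r$ colors contains a copy of $K_p^{(k)}$ (i.e. a set of $p$ vertices) whose edges receive at most $q-1$ distinct colors. (For $k=1$, $K_n^{(1)}$ has the $n$ singletons as edges, so the coloring is a coloring of vertices.) *)

(* Defs.v *)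
From mathcomp Require Import all_boot.
From Stdlib Require Import ClassicalEpsilon.

Set Implicit Arguments. Unset Strict Implicit. Unset Printing Implicit Defensive.

(* Colorings of the edges of K_n^(k) with r colours: a function from subsets
   of 'I_n to 'I_r; only its values on k-subsets (the edges) matter. *)

Definition ncolors (n k r : nat) (c : {ffun {set 'I_n} -> 'I_r}) (S : {set 'I_n}) : nat :=
  #|[set c e | e in [pred e : {set 'I_n} | (e \subset S) && (#|e| == k)]]|.

Definition arrows (k r p q n : nat) : bool :=
  [forall c : {ffun {set 'I_n} -> 'I_r},
     [exists S : {set 'I_n}, (#|S| == p) && (ncolors k c S <= q.-1)]].

(* F_k(r,p,q): the minimum such n (0 if none exists; by Ramsey's theorem one
   always exists under the standing hypotheses). *)
Definition F (k r p q : nat) : nat :=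
  match excluded_middle_informative (exists n, arrows k r p q n) with
  | left H => ex_minn H
  | right _ => 0
  end.

(* Main.v *)
Require Import Defs.
From mathcomp Require Import all_boot.
From Stdlib Require Import ClassicalEpsilon.
Set Implicit Arguments. Unset Strict Implicit. Unset Printing Implicit Defensive.

Lemma ncolors_le n k r (c : {ffun {set 'I_n} -> 'I_r}) S : ncolors k c S <= 'C(#|S|, k).
Proof.
rewrite /ncolors -cards_draws; apply: leq_trans (leq_imset_card _ _) _.
by rewrite leq_eqVlt; apply/orP; left; apply/eqP; apply: eq_card => e; rewrite !inE.
Qed.

Lemma arrows_triv k r p q : 'C(p, k) < q -> arrows k r p q p.
Proof.
move=> hq; apply/forallP => c; apply/existsP; exists setT.
rewrite cardsT card_ord eqxx /=.
apply: leq_trans (ncolors_le _ _ _) _; rewrite cardsT card_ord.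
by case: q hq.
Qed.

Lemma arrows_ge k r p q n : 0 < r -> arrows k r p q n -> p <= n.
Proof.
move=> r0 /forallP /(_ [ffun=> Ordinal r0]) /existsP [S /andP [/eqP <- _]].
by apply: leq_trans (max_card S) _; rewrite card_ord.
Qed.

Lemma F_le k r p q n : arrows k r p q n -> F k r p q <= n.
Proof.
move=> H; rewrite /F; case: excluded_middle_informative => [H'|[]]; last by exists n.
by case: ex_minnP => m _; apply.
Qed.

Lemma F_arrows k r p q : (exists n, arrows k r p q n) -> arrows k r p q (F k r p q).
Proof.
move=> H; rewrite /F; case: excluded_middle_informative => [H'|//].
by case: ex_minnP.
Qed.

Lemma pigeon (n r : nat) (f : 'I_n -> 'I_r) (S : {set 'I_n}) : 0 < r ->
  exists col : 'I_r, #|S| <= r * #|[set x in S | f x == col]|.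
Proof.
move=> r0; pose c0 := Ordinal r0.
exists [arg max_(col > c0) #|[set x in S | f x == col]|].
case: arg_maxnP => // col _ Hmax.
have -> : #|S| = \sum_(col' < r) #|[set x in S | f x == col']|.
  rewrite -sum1_card (partition_big f xpredT) //=.
  apply: eq_bigr => j _; rewrite -sum1_card; apply: eq_bigl => x; by rewrite !inE.
rewrite -[X in X * _]card_ord -sum_nat_const; apply: leq_sum => j _; exact: Hmax.
Qed.
Lemma partition_seq n r (X : eqType) (g : X -> 'I_n -> 'I_r) (s : seq X) (S : {set 'I_n}) :
  0 < r -> exists S' : {set 'I_n}, [/\ S' \subset S,
    (forall B x y, B \in s -> x \in S' -> y \in S' -> g B x = g B y) &
    #|S| <= r ^ size s * #|S'|].
Proof.
move=> r0; elim: s => [|B s [S1 [sub1 h1 c1]]].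
  by exists S; split => //; rewrite mul1n.
have [col hcol] := pigeon (g B) S1 r0.
exists [set x in S1 | g B x == col]; split.
- apply: subset_trans sub1; apply/subsetP => x; rewrite inE; by case/andP.
- move=> B' x y; rewrite inE => /orP [/eqP -> | hB'];
    rewrite !inE => /andP [hx ex] /andP [hy ey].
  + by rewrite (eqP ex) (eqP ey).
  + exact: h1.
- rewrite /= expnS -mulnA mulnCA; apply: leq_trans c1 _; by rewrite leq_pmul2l ?expn_gt0 ?r0.
Qed.
Fixpoint need r k t j := match j with 0 => 1
  | j'.+1 => r ^ 'C(t, k.-1) * (need r k t.+1 j' - 1) + 2 end.
Fixpoint sQ r k t j := match j with 0 => 0 | j'.+1 => r ^ 'C(t, k) + sQ r k t.+1 j' end.

Lemma sQ_r r k t j : sQ r k t j.+1 = sQ r k t j + r ^ 'C(t + j, k).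
Proof. elim: j t => [|j IH] t; first by rewrite /= addn0 add0n addn0.
have -> : sQ r k t j.+2 = r ^ 'C(t,k) + sQ r k t.+1 j.+1 by [].
have -> : sQ r k t j.+1 = r ^ 'C(t,k) + sQ r k t.+1 j by [].
by rewrite IH addnA addSnnS. Qed.

Lemma need_ge1 r k t j : 1 <= need r k t j.
Proof. by case: j => //= j; rewrite addn2. Qed.

Lemma needA r k t j : 0 < k ->
  r ^ 'C(t, k) * (need r k t j - 1) = sQ r k t j.
Proof.
case: k => // k _; elim: j t => [|j IH] t /=; first by rewrite subnn muln0.
rewrite addn2 subSS subn0 -IH mulnS mulnA -expnD addnC -binS.
by [].
Qed.

Lemma sQ_arith r k m : 0 < k -> k < r -> k <= m -> 1 + sQ r k 0 m <= r ^ 'C(m, k).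
Proof.
move=> k0 kr; elim: m => [|m IH]; first by case: k k0 kr.
rewrite leq_eqVlt => /orP [/eqP E | km].
  have h : forall j, j <= m.+1 -> sQ r k 0 j = j.
    elim => [//|j IHj] hj; rewrite sQ_r IHj ?(ltnW hj) // add0n bin_small ?E //.
    by rewrite expn0 addn1.
  by rewrite h // E binn expn1 add1n -E.
rewrite sQ_r add0n addnA; apply: leq_trans (leq_add (IH km) (leqnn _)) _.
rewrite addnn -mul2n; case: k k0 kr km IH => // k _ kr km IH.
rewrite binS expnD mulnC leq_mul2l; apply/orP; right.
have r0 : 0 < r by apply: leq_trans kr.
apply: leq_trans (leq_pexp2l r0 (_ : 1 <= 'C(m, k))).
  by rewrite expn1; apply: leq_ltn_trans kr.
by rewrite bin_gt0; apply: ltnW.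
Qed.

Lemma need_arith r k m : 0 < k -> k < r -> k <= m -> need r k 0 m <= r ^ 'C(m, k).
Proof.
move=> k0 kr km; apply: leq_trans (sQ_arith k0 kr km).
have := needA r 0 m k0; rewrite bin0n; case: k k0 {kr km} => // k _.
rewrite expn0 mul1n => <-; rewrite add1n subn1 prednK //; exact: need_ge1.
Qed.
Definition invar n r k (c : {ffun {set 'I_n} -> 'I_r}) (V S : {set 'I_n}) : Prop :=
  (forall y x, y \in V -> x \in S -> y < x) /\
  (forall (A : {set 'I_n}) x y, A \subset V -> #|A| = k -> x \in V :|: S -> y \in V :|: S ->
     (forall a, a \in A -> a < x) -> (forall a, a \in A -> a < y) ->
     c (x |: A) = c (y |: A)).

Lemma inv_sub n r k (c : {ffun {set 'I_n} -> 'I_r}) (V S1 S2 : {set 'I_n}) : S2 \subset S1 ->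
  invar k c V S1 -> invar k c V S2.
Proof.
move=> /subsetP sub [h1 h2]; split.
  by move=> y x hy hx; apply: h1 => //; apply: sub.
move=> A x y hA hk hx hy; apply: h2 => //.
  move: hx; rewrite !inE => /orP [->//|/sub ->]; by rewrite orbT.
move: hy; rewrite !inE => /orP [->//|/sub ->]; by rewrite orbT.
Qed.


Lemma greedy n r k (c : {ffun {set 'I_n} -> 'I_r}) : 0 < r -> 0 < k ->
  forall j (V S : {set 'I_n}), invar k c V S -> need r k #|V| j <= #|S| ->
  exists (V' : {set 'I_n}) w, #|V'| = #|V| + j /\ invar k c V' [set w].
Proof.
move=> r0 k0; elim => [|j IH] V S hinv hS.
  have [x0 hx0] : exists x, x \in S by apply/set0Pn; rewrite -card_gt0.
  exists V, x0; split; first by rewrite addn0.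
  by apply: inv_sub hinv; rewrite sub1set.
have [x0 hx0] : exists x, x \in S.
  by apply/set0Pn; rewrite -card_gt0; apply: leq_trans hS; rewrite /= addn2.
pose v := [arg min_(x < x0 in S) val x].
have [vS vmin] : v \in S /\ forall x, x \in S -> v <= x.
  by rewrite /v; case: arg_minnP => // u hu hmin; split.
pose s := enum [set B : {set 'I_n} | B \subset V & #|B| == k.-1].
pose g := fun (B : {set 'I_n}) (x : 'I_n) => c (x |: (v |: B)).
have [S' [subS' hS' cS']] := partition_seq g s (S :\ v) r0.
have hsize : size s = 'C(#|V|, k.-1) by rewrite /s -cardE cards_draws.
case: hinv => [h1 h2].
have vV : v \notin V by apply/negP => /h1 /(_ vS); rewrite ltnn.
have S'S : S' \subset S by apply: subset_trans subS' (subsetDl _ _).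
have vS' : v \notin S' by apply/negP => /(subsetP subS'); rewrite !inE eqxx.
have Vv : forall x, x \in V -> x < v by move=> x hx; apply: h1.
have hcard : need r k #|V|.+1 j <= #|S'|.
  move: hS cS'; rewrite /= hsize (cardsD1 v S) vS add1n /= => hS cS'.
  set x := r ^ _ in hS cS'; set N := need _ _ _ _ in hS *.
  have x0' : 0 < x by rewrite expn_gt0 r0.
  have : x * N.-1 < x * #|S'|.
    rewrite -subn1; apply: leq_trans cS'; rewrite -ltnS; apply: leq_trans hS; by rewrite addn2.
  rewrite ltn_pmul2l // => h; case: (N) h => //.
have hinv' : invar k c (v |: V) S'.
  split.
  - move=> y x; rewrite !inE => /orP [/eqP -> | hy] hx.
    + rewrite ltn_neqAle vmin ?andbT; last by apply: (subsetP S'S).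
      by apply/negP => /eqP /val_inj E; move: hx; rewrite -E (negbTE vS').
    + apply: h1 => //; by apply: (subsetP S'S).
  - move=> A x y hA hk hx hy hAx hAy.
    case: (boolP (v \in A)) => vA.
    + have hB : A :\ v \in s.
        rewrite /s mem_enum inE; apply/andP; split.
        * apply/subsetP => a; rewrite !inE => /andP [av /(subsetP hA)].
          by rewrite !inE (negbTE av).
        * by move: hk; rewrite (cardsD1 v A) vA add1n => <-.
      have inS' : forall z, z \in (v |: V) :|: S' -> (forall a, a \in A -> a < z) -> z \in S'.
        move=> z; rewrite !inE => /orP [/orP [/eqP -> | zV] | //] hz.
        * by move: (hz _ vA); rewrite ltnn.
        * by move: (hz _ vA) (Vv _ zV) => /ltn_trans H /H; rewrite ltnn.
      have := hS' _ x y hB (inS' _ hx hAx) (inS' _ hy hAy).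
      by rewrite /g (setD1K vA).
    + have hAV : A \subset V.
        apply/subsetP => a ha; move: (subsetP hA a ha); rewrite !inE => /orP [/eqP E|//].
        by move: vA; rewrite -E ha.
      have inVS : forall z, z \in (v |: V) :|: S' -> z \in V :|: S.
        move=> z; rewrite !inE => /orP [/orP [/eqP -> | ->] | /(subsetP S'S) ->];
          by rewrite ?vS ?orbT.
      by apply: h2 => //; apply: inVS.
have h' : need r k #|v |: V| j <= #|S'| by rewrite cardsU1 vV.
have [V' [w [hV' hw]]] := IH _ _ hinv' h'.
exists V', w; split => //; by rewrite hV' cardsU1 vV add1n addSnnS.
Qed.
Lemma step k r p q m : 0 < k -> k < r -> k <= m -> arrows k r p q m ->
  arrows k.+1 r p.+1 q (r ^ 'C(m, k)).
Proof.
move=> k0 kr km harr; apply/forallP => c.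
have r0 : 0 < r by apply: leq_trans kr.
have hinv0 : invar k c set0 setT.
  split; first by move=> y x; rewrite inE.
  move=> A x y; rewrite subset0 => /eqP -> hk; exfalso; move: hk; rewrite cards0 => hk; by move: k0; rewrite -hk.
have hneed : need r k #|(set0 : {set 'I_(r ^ 'C(m, k))})| m <= #|(setT : {set 'I_(r ^ 'C(m, k))})|.
  by rewrite cards0 cardsT card_ord need_arith.
have [V' [w [hm [i1 i2]]]] := greedy r0 k0 hinv0 hneed.
rewrite cards0 add0n in hm.
pose phi := fun i : 'I_m => enum_val (cast_ord (esym hm) i).
have phiV : forall i, phi i \in V' by move=> i; apply: enum_valP.
have phi_inj : injective phi.
  by move=> i j /enum_val_inj /(congr1 val) /= /val_inj.
have Vw : forall y, y \in V' -> y < w by move=> y hy; apply: i1 => //; rewrite inE.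
pose c' := [ffun B : {set 'I_m} => c (w |: phi @: B)].
have /existsP [T /andP [/eqP hT hcT]] := forallP harr c'.
apply/existsP; exists (w |: phi @: T).
have wT : w \notin phi @: T.
  apply/negP => /imsetP [i _ E]; by move: (Vw _ (phiV i)); rewrite -E ltnn.
rewrite cardsU1 wT card_imset // hT eqxx /=.
apply: leq_trans hcT; apply: subset_leq_card; apply/subsetP => col /imsetP [e].
rewrite inE => /andP [heS /eqP he] ->.
have [e0 he0] : exists x, x \in e by apply/set0Pn; rewrite -card_gt0 he.
pose z := [arg max_(i > e0 in e) val i].
have [ze zmax] : z \in e /\ forall a, a \in e -> a <= z.
  by rewrite /z; case: arg_maxnP => // u hu hmax; split.
pose A := e :\ z.
have hA : #|A| = k by move: he; rewrite (cardsD1 z e) ze add1n => -[].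
have zS : z \in w |: phi @: T by apply: (subsetP heS).
have wA : w \notin A.
  apply/negP; rewrite !inE => /andP [wz we].
  move: zS; rewrite !inE => /orP [/eqP E|/imsetP [i _ E]]; first by rewrite E eqxx in wz.
  by move: (zmax _ we) (Vw _ (phiV i)); rewrite -E => /leq_ltn_trans H /H; rewrite ltnn.
have AT : A \subset phi @: T.
  apply/subsetP => a ha; have := subsetP heS a (subsetP (subsetDl e [set z]) a ha).
  rewrite !inE => /orP [/eqP E|//]; by move: wA; rewrite -E ha.
have AV : A \subset V'.
  apply/subsetP => a /(subsetP AT) /imsetP [i _ ->]; exact: phiV.
have ecol : c e = c (w |: A).
  rewrite -{1}(setD1K ze); apply: i2 => //.
  - move: zS; rewrite !inE => /orP [->|/imsetP [i _ ->]]; by rewrite ?phiV ?orbT.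
  - by rewrite !inE eqxx orbT.
  - move=> a ha; rewrite ltn_neqAle zmax; last by move: ha; rewrite inE => /andP [].
    by move: ha; rewrite !inE => /andP [-> _].
  - by move=> a /(subsetP AV); exact: Vw.
pose B := [set i in T | phi i \in A].
have hB : phi @: B = A.
  apply/setP => x; apply/imsetP/idP => [[i] | hx].
    by rewrite inE => /andP [_ hi] ->.
  have /imsetP [i hi E] := subsetP AT x hx.
  by exists i => //; rewrite inE hi -E hx.
apply/imsetP; exists B.
  rewrite inE; apply/andP; split.
    by apply/subsetP => i; rewrite inE => /andP [].
  by rewrite -(card_imset _ phi_inj) hB hA.
by rewrite ecol ffunE hB.
Qed.
Lemma base1 r p q : 0 < r -> 1 < q -> arrows 1 r p q (r * p).
Proof.
move=> r0 q1; apply/forallP => c.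
have [col hcol] := pigeon (fun x => c [set x]) [set: 'I_(r * p)] r0.
set C := [set x in _ | _] in hcol.
have : p <= #|C| by move: hcol; rewrite cardsT card_ord leq_pmul2l.
case/card_geqP => s [us ss sub].
apply/existsP; exists [set x in s]; rewrite cardsE (card_uniqP us) ss eqxx /=.
apply: leq_trans (_ : #|[set col]| <= _); last by rewrite cards1; case: q q1 => [|[]].
apply: subset_leq_card; apply/subsetP => y /imsetP [e]; rewrite inE => /andP [hs /cards1P [x ex]] ->.
have : x \in C by apply: sub; rewrite ex in hs; move: (subsetP hs x); rewrite inE eqxx inE; apply.
by rewrite ex !inE => /andP [_ /eqP ->].
Qed.

Lemma exist_arrows r k : 1 < r -> 0 < k -> k <= r -> forall p q, 1 < q -> exists n, arrows k r p q n.
Proof.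
move=> r1; have r0 : 0 < r by apply: ltnW.
elim: k => [//|k IH] k0 kr p q q1.
case: k IH k0 kr => [_ _ _ | k IH _ kr]; first by exists (r * p); apply: base1.
case: p => [|p]; first by exists 0; apply: arrows_triv; rewrite bin_small // ltnW.
have [m hm] := IH isT (ltnW kr) p q q1.
case: (leqP k.+1 m) => km.
  by exists (r ^ 'C(m, k.+1)); apply: step.
exists p.+1; apply: arrows_triv; rewrite bin_small; first by apply: ltnW.
by rewrite ltnS; apply: leq_ltn_trans (arrows_ge r0 hm) km.
Qed.

Theorem theorem1p4 (r k p q : nat) :
  1 < r -> 1 < k -> 1 < p -> 1 < q ->
  k <= r -> k.+1 <= p -> 2 <= q -> q <= 'C(p, k) ->
  F k r p q <=
    r ^ 'C(if 'C(p.-1, k.-1) < q then p.-1 else F k.-1 r p.-1 q, k.-1).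
Proof.
move=> r1 k1 p1 q1 kr kp _ _.
have r0 : 0 < r by apply: ltnW.
case: k k1 kr kp => [//|k] k1 kr kp; case: p p1 kp => [//|p] _ kp /=.
have k0 : 0 < k by [].
suff [hm km] : arrows k r p q (if 'C(p, k) < q then p else F k r p q) /\
               k <= (if 'C(p, k) < q then p else F k r p q).
  by apply: F_le; apply: step.
case: ifP => hq.
  by split; [apply: arrows_triv | apply: ltnW].
have ha := F_arrows (exist_arrows r1 k0 (ltnW kr) p q1).
split => //; apply: leq_trans (arrows_ge r0 ha); exact: ltnW.
Qed.
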